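(* Let $S$ be a finite set, let $\sigma\in\mathrm{Perm}(S)$, and let $\tau,\tau'\in\mathrm{Perm}(S)$ have disjoint supports. Then: (1) $(\sigma\setminus\tau)^{-1}=\sigma^{-1}\setminus\tau^{-1}$; (2) $(\sigma\setminus\tau)\setminus\tau'=\sigma\setminus(\tau\tau')=(\sigma\setminus\tau')\setminus\tau$; (3) two elements $(i,k),(i',k')\in\{0,1\}\times(S\setminus\mathrm{supp}(\tau))$ lie in the same cycle of $\tau'\tau\bowtie\sigma$ if and only if they lie in the same cycle of $\tau'\bowtie(\sigma\setminus\tau)$ (where $\tau'$ is regarded as a permutation of $S\setminus\mathrm{supp}(\tau)$, which it preserves).
   Context: $\mathrm{Perm}(S)$ denotes permutations of $S$ and $\mathrm{supp}(\sigma)=\{k:\sigma(k)\neq k\}$. For $\sigma,\tau\in\mathrm{Perm}(S)$, $\sigma\setminus\tau\in\mathrm{Perm}(S\setminus\mathrm{supp}(\tau))$ is defined by $(\sigma\setminus\tau)(k)=(\tau\sigma)^{r(k)}(k)$, where $r(k)\ge1$ is the smallest integer with $(\tau\sigma)^{r(k)}(k)\notin\mathrm{supp}(\tau)$. For $\pi,\sigma\in\mathrm{Perm}(S)$, $\pi\bowtie\sigma\in\mathrm{Perm}(\{0,1\}\times S)$ is given by $(0,k)\mapsto(1,\sigma(k))$ and $(1,k)\mapsto(0,\pi(k))$. *)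

(* Defs.v *)
From mathcomp Require Import all_boot all_fingroup.
Set Implicit Arguments. Unset Strict Implicit. Unset Printing Implicit Defensive.

Local Open Scope group_scope.

Section Defs.
Variable T : finType.

Definition supp (s : {perm T}) : {set T} := [set k | s k != k].

(* r(k) - 1 : index of the first j (>= 0) with (tau sigma)^(j+1) k outside supp tau.
   Note: mathcomp's (sigma * tau) x = tau (sigma x), i.e. it is the paper's tau sigma. *)
Definition rm_idx (s t : {perm T}) (k : T) : nat :=
  find (fun j => ((s * t) ^+ j.+1) k \notin supp t) (iota 0 #|T|).

Definition rm_fun (s t : {perm T}) (k : T) : T :=
  if k \in supp t then k else ((s * t) ^+ (rm_idx s t k).+1) k.

Lemma rm_idx_lt s t k : k \notin supp t -> rm_idx s t k < #|T|.
Proof.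
move=> kA; set p := s * t.
have ho : fingraph.order p k <= #|T| by rewrite /fingraph.order; apply: max_card.
have o0 : 0 < fingraph.order p k by apply: fingraph.order_gt0.
rewrite /rm_idx -[X in _ < X](size_iota 0 #|T|) -has_find; apply/hasP.
exists (fingraph.order p k).-1; first by rewrite mem_iota /= add0n prednK.
by rewrite prednK // permX iter_order //; apply: perm_inj.
Qed.

Lemma rm_fun_out s t k : k \notin supp t -> rm_fun s t k \notin supp t.
Proof.
move=> kA; rewrite /rm_fun (negbTE kA).
have := rm_idx_lt s kA; rewrite /rm_idx -[X in _ < X](size_iota 0 #|T|) -has_find.
move=> /(nth_find 0); rewrite nth_iota //.
by move: (rm_idx_lt s kA).
Qed.

Lemma rm_fun_inj s t : injective (rm_fun s t).
Proof.
have key : forall k k', k \notin supp t -> k' \notin supp t ->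
    rm_idx s t k <= rm_idx s t k' -> rm_fun s t k = rm_fun s t k' -> k = k'.
  move=> k k' kA k'A le E; move: E; rewrite /rm_fun (negbTE kA) (negbTE k'A).
  set p := s * t; set a := rm_idx s t k; set b := rm_idx s t k'.
  have -> : b.+1 = (b - a) + a.+1 by rewrite addnS subnK.
  rewrite expgD permM => /perm_inj E.
  case: (posnP (b - a)) => [d0|dpos]; first by rewrite d0 expg0 perm1 in E.
  have ltb : (b - a).-1 < b by apply: leq_trans (leq_subr a b); rewrite prednK.
  have := @before_find _ 0 (fun j => (p ^+ j.+1) k' \notin supp t) (iota 0 #|T|) _ ltb.
  rewrite nth_iota; last by apply: ltn_trans ltb (rm_idx_lt s k'A).
  by rewrite add0n prednK // -E kA.
move=> k k'.
case kA: (k \in supp t); case k'A: (k' \in supp t).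
- by rewrite /rm_fun kA k'A.
- move=> E; have := rm_fun_out s (negbT k'A); rewrite -E /rm_fun kA.
  by rewrite kA.
- move=> E; have := rm_fun_out s (negbT kA); rewrite E /rm_fun k'A.
  by rewrite k'A.
- case: (leqP (rm_idx s t k) (rm_idx s t k')) => le E.
  + exact: key (negbT kA) (negbT k'A) le E.
  + by symmetry; apply: key (negbT k'A) (negbT kA) (ltnW le) (esym E).
Qed.

(* sigma \ tau, a permutation of S \ supp tau, encoded as a permutation of S
   that is the identity on supp tau. *)
Definition perm_remove (s t : {perm T}) : {perm T} := perm (@rm_fun_inj s t).

(* pi ⋈ sigma on {0,1} x S, with 0 = false, 1 = true:
   (0,k) |-> (1, sigma k), (1,k) |-> (0, pi k). *)
Definition bowtie_fun (pi s : {perm T}) (x : bool * T) : bool * T :=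
  if x.1 then (false, pi x.2) else (true, s x.2).

Lemma bowtie_inj pi s : injective (bowtie_fun pi s).
Proof.
move=> [[] k] [[] k'] //= [] /perm_inj -> //.
Qed.

Definition bowtie (pi s : {perm T}) : {perm (bool * T)} := perm (@bowtie_inj pi s).

End Defs.

Notation "s \rm t" := (perm_remove s t) (at level 40, left associativity).
Notation "pi \bowtie s" := (bowtie pi s) (at level 40).

(* Main.v *)
Require Import Defs.
From mathcomp Require Import all_boot all_fingroup.
Set Implicit Arguments. Unset Strict Implicit. Unset Printing Implicit Defensive.

Local Open Scope group_scope.

Section Aux.
Variable T : finType.

Inductive path (p : T -> T) (P : pred T) : T -> T -> Prop :=
| p_here x : path p P x (p x)
| p_step x y : ~~ P (p x) -> path p P (p x) y -> path p P x y.

Lemma path_uniq p P x y z : path p P x y -> path p P x z -> P y -> P z -> y = z.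
Proof.
move=> H; elim: H z => [x0|x0 y0 nP _ IH] z H2 Py Pz.
  inversion H2; subst => //.
  by rewrite Py in H.
inversion H2; subst; first by rewrite Pz in nP.
exact: IH.
Qed.

Lemma path_iter p P x n : (forall j, j < n -> ~~ P (iter j.+1 p x)) ->
  path p P x (iter n.+1 p x).
Proof.
elim: n x => [|n IH] x H; first exact: p_here.
apply: p_step; first exact: (H 0).
rewrite iterSr; apply: IH => j lj; rewrite -iterSr; exact: (H j.+1).
Qed.

Lemma path_restr p P (Q : pred T) x y : path p P x y -> Q y -> (forall z, Q z -> P z) ->
  path p Q x y.
Proof.
elim=> [x0|x0 y0 nP _ IH] Qy QP; first exact: p_here.
apply: p_step; last exact: IH.
by apply/negP => /QP; apply/negP.
Qed.

Lemma path_cat p P (Q : pred T) x z y : path p P x z -> ~~ Q z -> (forall w, Q w -> P w) ->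
  path p Q z y -> path p Q x y.
Proof.
elim=> [x0|x0 y0 nP _ IH] nQ QP H; first exact: p_step.
apply: p_step; last exact: IH.
by apply/negP => /QP; apply/negP.
Qed.

Lemma path_snoc p P x y : path p P x y -> ~~ P y -> path p P x (p y).
Proof.
elim=> [x0|x0 y0 nP _ IH] nPy.
  by apply: p_step => //; apply: p_here.
by apply: p_step => //; apply: IH.
Qed.

Lemma path_iterE p P x y : path p P x y -> exists n, y = iter n.+1 p x.
Proof.
elim=> [x0|x0 y0 _ _ [n ->]]; first by exists 0.
by exists n.+1; rewrite [in RHS]iterSr.
Qed.

Lemma path_first p P x y : path p P x y -> forall n, P (iter n.+1 p x) ->
  exists m, iter n.+1 p x = iter m p y /\ m <= n.
Proof.
elim=> [x0|x0 y0 nP _ IH] n Pn; first by exists n; rewrite iterSr.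
case: n Pn => [|n] Pn; first by rewrite /= in Pn; rewrite Pn in nP.
rewrite iterSr in Pn; have [m [E le]] := IH n Pn.
by exists m; rewrite iterSr E; split => //; apply: leqW.
Qed.

Lemma path_pres p P (A : pred T) x y : (forall z, A z -> A (p z)) ->
  path p P x y -> A x -> A y.
Proof.
move=> pA H Ax; have [n ->] := path_iterE H.
by elim: n.+1 => //= m IH; apply: pA.
Qed.

Lemma ret_orbit (p f : T -> T) (A : pred T) :
  (forall a, A a -> path p A a (f a)) -> (forall a, A a -> A (f a)) ->
  forall a b, A a -> A b ->
   (exists n, b = iter n p a) <-> (exists m, b = iter m f a).
Proof.
move=> Hp Hf a b Aa Ab; split.
  case=> n; elim: n {-2}n (leqnn n) a Aa => [|N IH] n le a Aa E.
    by exists 0; move: le; rewrite leqn0 => /eqP n0; rewrite E n0.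
  case: n le E => [|n] le E; first by exists 0.
  rewrite E in Ab; have [m [E2 lm]] := path_first (Hp a Aa) Ab.
  have [m' ->] := IH m (leq_trans lm le) (f a) (Hf a Aa) (etrans E E2).
  by exists m'.+1; rewrite iterSr.
case=> m ->; elim: m => [|m [n IH]]; first by exists 0.
have Am : A (iter m f a).
  by elim: m {IH} => //= m IHm; apply: Hf.
have [k Ek] := path_iterE (Hp _ Am).
by exists (k.+1 + n); rewrite iterS Ek IH iterD.
Qed.

Lemma supp_perm (t : {perm T}) z : (t z \in supp t) = (z \in supp t).
Proof. by rewrite !inE (inj_eq (@perm_inj _ t)). Qed.

Lemma supp_inv (t : {perm T}) z : (z \in supp t^-1) = (z \in supp t).
Proof.
rewrite !inE; congr negb; apply/eqP/eqP => E.
  by rewrite -{1}E permKV.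
by rewrite -{1}E permK.
Qed.

Lemma notsupp (t : {perm T}) z : z \notin supp t -> t z = z.
Proof. by rewrite inE negbK => /eqP. Qed.

Lemma rm_path (s t : {perm T}) k : k \notin supp t ->
  path (s * t) [pred z | z \notin supp t] k ((s \rm t) k).
Proof.
move=> kA; rewrite /perm_remove permE /rm_fun (negbTE kA) permX.
apply: path_iter => j lj.
have := @before_find _ 0 (fun j => ((s * t) ^+ j.+1) k \notin supp t)
  (iota 0 #|T|) _ lj.
rewrite nth_iota; last exact: ltn_trans lj (rm_idx_lt s kA).
by rewrite add0n permX /= => ->.
Qed.

Lemma rm_in (s t : {perm T}) k : k \in supp t -> (s \rm t) k = k.
Proof. by move=> kA; rewrite /perm_remove permE /rm_fun kA. Qed.

Lemma rm_out (s t : {perm T}) k : k \notin supp t -> (s \rm t) k \notin supp t.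
Proof. by move=> kA; rewrite /perm_remove permE; apply: rm_fun_out. Qed.

Lemma disj_fix (t t' : {perm T}) z : [disjoint supp t & supp t'] ->
  z \in supp t -> t' z = z.
Proof.
move=> d zt; apply: notsupp; by rewrite (disjointFr d zt).
Qed.

Lemma disj_comm (t t' : {perm T}) : [disjoint supp t & supp t'] -> t * t' = t' * t.
Proof.
move=> d; apply/permP => z; rewrite !permM.
have d' : [disjoint supp t' & supp t] by rewrite disjoint_sym.
case zt: (z \in supp t).
  by rewrite (disj_fix d zt) (disj_fix d) // supp_perm.
case zt': (z \in supp t').
  by rewrite (disj_fix d' zt') (disj_fix d') // supp_perm.
by rewrite !notsupp ?zt ?zt'.
Qed.

Lemma supp_mul (t t' : {perm T}) z : [disjoint supp t & supp t'] ->
  (z \in supp (t' * t)) = (z \in supp t) || (z \in supp t').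
Proof.
move=> d; have d' : [disjoint supp t' & supp t] by rewrite disjoint_sym.
case zt: (z \in supp t).
  by rewrite inE permM (disj_fix d zt); rewrite inE in zt.
case zt': (z \in supp t').
  by rewrite inE permM (disj_fix d') ?supp_perm //; rewrite inE in zt'.
by rewrite inE permM !notsupp ?zt ?zt' ?eqxx.
Qed.

Lemma part1 (s t : {perm T}) : (s \rm t)^-1 = s^-1 \rm t^-1.
Proof.
suff H : forall k, (s \rm t) ((s^-1 \rm t^-1) k) = k.
  by apply/permP => k; rewrite -{1}(H k) permK.
move=> k; case kt: (k \in supp t).
  by rewrite (@rm_in s^-1) ?supp_inv // rm_in.
have kt' : k \notin supp t^-1 by rewrite supp_inv kt.
set y := (s^-1 \rm t^-1) k.
have yt : y \notin supp t by rewrite -supp_inv rm_out.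
have P1 := rm_path s^-1 kt'.
have P2 : path (s^-1 * t^-1)^-1 [pred z | z \notin supp t] y k.
  have : path (s^-1 * t^-1) [pred z | z \notin supp t] k y.
    by apply: (path_restr P1) => [|z] /=; rewrite ?supp_inv.
  elim=> [x0|x0 y0 nP _ IH]; first by rewrite -{2}[x0](permK (s^-1 * t^-1)); apply: p_here.
  have := path_snoc IH nP; rewrite permK; exact.
have E : (s^-1 * t^-1)^-1 = t * s by rewrite invMg !invgK.
rewrite E in P2.
have P3 : forall x y, path (t * s) [pred z | z \notin supp t] x y ->
    path (s * t) [pred z | z \notin supp t] (t x) (t y).
  move=> x0 y0; elim=> [x1|x1 y1 nP _ IH].
    by have := p_here (s*t) [pred z | z \notin supp t] (t x1); rewrite !permM.
  apply: p_step; rewrite [(s*t) (t x1)]permM -[s (t x1)]permM //.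
  by rewrite /= supp_perm.
have := P3 _ _ P2; rewrite (notsupp yt) (notsupp (negbT kt)) => P4.
apply: esym; apply: (path_uniq P4 (rm_path s yt)); rewrite /= ?kt //.
exact: rm_out.
Qed.

Lemma part2 (s t t' : {perm T}) : [disjoint supp t & supp t'] ->
  (s \rm t) \rm t' = s \rm (t' * t).
Proof.
move=> d; have d' : [disjoint supp t' & supp t] by rewrite disjoint_sym.
apply/permP => k.
case kt: (k \in supp t).
  rewrite (rm_in s) ?supp_mul ?kt //.
  have kt' : k \notin supp t' by rewrite (disjointFr d kt).
  apply: (path_uniq (rm_path (s \rm t) kt')); rewrite //=; last exact: rm_out.
  by have := p_here (s \rm t * t') [pred z | z \notin supp t'] k; rewrite permM rm_in // notsupp.
case kt': (k \in supp t').
  by rewrite (rm_in (s \rm t)) // rm_in // supp_mul ?kt'  ?orbT.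
set A := [pred z | z \notin supp t].
set B := [pred z | z \notin supp t'].
set AB := [pred z | z \notin supp (t' * t)].
have ABA : forall z, AB z -> A z by move=> z; rewrite /= supp_mul // negb_or => /andP[].
have ABB : forall z, AB z -> B z by move=> z; rewrite /= supp_mul // negb_or => /andP[].
have HA : forall x, A x -> path (s * t * t') A x ((s \rm t * t') x).
  move=> x Ax; rewrite permM; have := rm_path s Ax.
  elim=> [x0|x0 y0 nP _ IH].
    have := p_here (s * t * t') A x0; rewrite permM; exact.
  have nP' : (s * t) x0 \in supp t by move: nP; rewrite /= negbK.
  by apply: p_step; rewrite [(s * t * t') x0]permM (disj_fix d nP').
have pres : forall z, A z -> A (t' z).
  move=> z; rewrite /= => Az; case zt': (z \in supp t').
    by rewrite (disjointFl d) // supp_perm.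
  by rewrite notsupp ?zt'.
have Af : forall z, A z -> A ((s \rm t * t') z).
  by move=> z Az; rewrite permM; apply: pres; apply: rm_out.
have ABE : forall z, AB z = A z && B z by move=> z; rewrite /= supp_mul // negb_or.
have G : forall x y, A x -> path (s \rm t * t') B x y -> B y -> path (s * t * t') AB x y.
  move=> x y Ax H; elim: H Ax => [x0|x0 y0 nP _ IH] Ax0 By.
    by apply: (path_restr (HA _ Ax0)) => //; rewrite ABE By Af.
  apply: (path_cat (HA _ Ax0)) => //; last by apply: IH => //; apply: Af.
  by rewrite ABE negb_and nP orbT.
have kAB : AB k by rewrite ABE /= kt kt'.
have H1 := G _ _ (ABA _ kAB) (rm_path (s \rm t) (ABB _ kAB)) (rm_out _ (ABB _ kAB)).
have H2 := rm_path s kAB.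
have E : s * (t' * t) = s * t * t' by rewrite -(disj_comm d) mulgA.
rewrite E in H2.
apply: (path_uniq H1 H2) => //; last exact: rm_out.
rewrite ABE /= (rm_out _ (ABB _ kAB)) andbT.
exact: (path_pres Af (rm_path (s \rm t) (ABB _ kAB)) (ABA _ kAB)).
Qed.

Lemma pres_disj (t t' : {perm T}) z : [disjoint supp t & supp t'] ->
  z \notin supp t -> t' z \notin supp t.
Proof.
move=> d Az; case zt': (z \in supp t').
  by rewrite (disjointFl d) // supp_perm.
by rewrite notsupp ?zt'.
Qed.

Lemma orbitE (p : {perm T}) x y : y \in porbit p x <-> exists n, y = iter n p x.
Proof.
split; first by rewrite porbit_traject => /trajectP[i _ ->]; exists i.
by case=> n ->; rewrite -permX mem_porbit.
Qed.

End Aux.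

Lemma bowtieE (T : finType) (pi s : {perm T}) x : (pi \bowtie s) x = bowtie_fun pi s x.
Proof. by rewrite /bowtie permE. Qed.

Lemma part3 (T : finType) (s t t' : {perm T}) : [disjoint supp t & supp t'] ->
  forall (i i' : bool) (k k' : T), k \notin supp t -> k' \notin supp t ->
        ((i', k') \in porbit ((t * t') \bowtie s) (i, k))
        = ((i', k') \in porbit (t' \bowtie (s \rm t)) (i, k)).
Proof.
move=> d i i' k k' kt k't.
set P := (t * t') \bowtie s; set Q := t' \bowtie (s \rm t).
set A := [pred x : bool * T | x.2 \notin supp t].
have Hs : forall z y, path (s * t) [pred z | z \notin supp t] z y -> y \notin supp t ->
    path P A (false, z) (true, y).
  move=> z y; elim=> [x0|x0 y0 nP _ IH] Ay.
    have sx : s x0 \notin supp t by rewrite -supp_perm -permM.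
    rewrite permM (notsupp sx).
    by have := p_here P A (false, x0); rewrite /P bowtieE.
  have sx : t (s x0) \in supp t by move: nP; rewrite /= negbK permM.
  have E1 : P (false, x0) = (true, s x0) by rewrite /P bowtieE.
  have E2 : P (true, s x0) = (false, t (s x0)).
    by rewrite /P bowtieE /bowtie_fun /= permM (disj_fix d sx).
  apply: p_step; rewrite E1; first by rewrite /= negbK -supp_perm.
  apply: p_step; rewrite E2; first by rewrite /= negbK.
  by have := IH Ay; rewrite permM.
have Hp : forall a, A a -> path P A a (Q a).
  case=> [[] z] Az.
    have := p_here P A (true, z).
    by rewrite /P /Q !bowtieE /bowtie_fun /= permM (notsupp Az).
  rewrite /Q bowtieE /bowtie_fun /=; apply: Hs; first exact: rm_path.
  exact: rm_out.
have Hf : forall a, A a -> A (Q a).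
  case=> [[] z] Az; rewrite /Q bowtieE /bowtie_fun /=.
    exact: pres_disj.
  exact: rm_out.
have := ret_orbit Hp Hf (a := (i, k)) (b := (i', k')) kt k't.
move=> [H1 H2]; apply/idP/idP.
  by move/orbitE => /H1 /orbitE.
by move/orbitE => /H2 /orbitE.
Qed.

Theorem lemma3p16 (T : finType) (s t t' : {perm T})
    (hdisj : [disjoint supp t & supp t']) :
  (s \rm t)^-1 = s^-1 \rm t^-1
  /\ ((s \rm t) \rm t' = s \rm (t' * t) /\ s \rm (t' * t) = (s \rm t') \rm t)
  /\ (forall (i i' : bool) (k k' : T), k \notin supp t -> k' \notin supp t ->
        ((i', k') \in porbit ((t * t') \bowtie s) (i, k))
        = ((i', k') \in porbit (t' \bowtie (s \rm t)) (i, k))).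
Proof.
split; first exact: part1.
split; last exact: part3.
split; first exact: part2.
have d' : [disjoint supp t' & supp t] by rewrite disjoint_sym.
by rewrite (@part2 _ s t' t d') (disj_comm hdisj).
Qed.
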